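(* Let $L$ be a geometric lattice of rank $r+1$ with linearly ordered atoms, let $B_1,\dots,B_m$ be its nbc-bases in lexicographic order, and let $\Delta_1,\dots,\Delta_m$ be as defined in the context. Then for each $j\ge 2$, $\Delta_j\cap\bigcup_{k=1}^{j-1}\Delta_k=\partial\Delta_j$.
   Context: A geometric lattice is a finite graded atomic lattice whose rank function satisfies the semimodular inequality. The order complex $\Delta(L)$ has the chains of $L-\{\hat 0,\hat 1\}$ as faces; facets correspond to maximal chains. Fix a linear order on the atoms; for a cover $x\lessdot y$ let $\lambda(x,y)$ be the least atom $a$ with $x\vee a=y$, and for a facet $F$ given by $\hat 0=x_0<\dots<x_{r+1}=\hat 1$ its minimal labeling is $\lambda(F)=(\lambda(x_0,x_1),\dots,\lambda(x_r,x_{r+1}))$. A basis is a set of $r+1$ atoms with join $\hat 1$; a circuit is a minimal dependent set of atoms; a broken circuit is a circuit minus its least element; an nbc-basis is a basis containing no broken circuit. The nbc-bases, each written as an increasing sequence, are ordered lexicographically: $B_1,\dots,B_m$. For an ordering $(b_1,\dots,b_{r+1})$ of a basis $B$, the associated facet is $b_1<b_1\vee b_2<\dots<b_1\vee\dots\vee b_r$ and its basis labeling is $(b_1,\dots,b_{r+1})$. $\Sigma_j$ is the union of the facets associated to all orderings of $B_j$, and $\Delta_j$ is the pure subcomplex of $\Sigma_j$ generated by those facets of $\Sigma_j$ whose minimal labeling coincides with their basis labeling. For $j\ge2$, $\Delta_j$ is an $(r-1)$-ball and $\partial\Delta_j$ denotes its boundary subcomplex. *)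

(* Defs.v *)
From mathcomp Require Import all_boot all_order.
Set Implicit Arguments. Unset Strict Implicit. Unset Printing Implicit Defensive.
Import Order.TTheory.
Local Open Scope order_scope.

Section GeomLattice.
Variables (disp : Order.disp_t) (L : finTBLatticeType disp).

Definition covers (x y : L) : bool :=
  (x < y) && [forall z : L, ~~ ((x < z) && (z < y))].

Definition atom (a : L) : bool := covers \bot a.

Definition is_rank (rk : L -> nat) : Prop :=
  rk \bot = 0%N /\ forall x y : L, covers x y -> rk y = (rk x).+1.

Definition atomic : Prop :=
  forall x : L, x = \join_(a | atom a && (a <= x)) a.

Definition semimodular (rk : L -> nat) : Prop :=
  forall x y : L, (rk (x `|` y) + rk (x `&` y) <= rk x + rk y)%N.

Definition geometric (rk : L -> nat) : Prop :=
  is_rank rk /\ atomic /\ semimodular rk.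

Definition atoms_set (S : {set L}) : bool := [forall a in S, atom a].

Definition joinS (S : {set L}) : L := \join_(a in S) a.

Definition dependent (rk : L -> nat) (S : {set L}) : bool :=
  atoms_set S && (rk (joinS S) < #|S|)%N.

Definition circuit (rk : L -> nat) (C : {set L}) : bool :=
  dependent rk C && [forall D : {set L}, (D \proper C) ==> ~~ dependent rk D].

(* lab : L -> nat encodes the linear order on atoms *)
Definition broken_circuit (rk : L -> nat) (lab : L -> nat) (D : {set L}) : bool :=
  [exists C : {set L}, circuit rk C &&
     [exists a in C, [forall b in C, (lab a <= lab b)%N] && (D == C :\ a)]].

Definition basis (n : nat) (B : {set L}) : bool :=
  atoms_set B && (#|B| == n) && (joinS B == \top).

Definition nbc_basis (rk : L -> nat) (lab : L -> nat) (n : nat) (B : {set L}) :=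
  basis n B && [forall D : {set L}, broken_circuit rk lab D ==> ~~ (D \subset B)].

Definition labseq (lab : L -> nat) (B : {set L}) : seq nat :=
  sort leq (map lab (enum B)).

Fixpoint lexlt (s t : seq nat) : bool :=
  match s, t with
  | x :: s', y :: t' => (x < y)%N || ((x == y) && lexlt s' t')
  | [::], _ :: _ => true
  | _, _ => false
  end.

Definition pjoin (s : seq L) (k : nat) : L := \join_(a <- take k s) a.

(* facet associated to an ordering (b_1,...,b_n) : b_1 < b_1 v b_2 < ... < b_1 v...v b_(n-1) *)
Definition assoc_facet n (s : n.-tuple L) : {set L} :=
  [set pjoin s (val k).+1 | k : 'I_n.-1].

Definition is_min_label (lab : L -> nat) (x y a : L) : bool :=
  [&& atom a, x `|` a == y &
      [forall b : L, (atom b && (x `|` b == y)) ==> (lab a <= lab b)%N]].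

(* minimal labeling of the facet associated to s (chain 0 < x_1 < ... < x_r < 1,
   with x_n = pjoin s n = 1 for a basis) coincides with the basis labeling s *)
Definition minlab_eq (lab : L -> nat) n (s : n.-tuple L) : bool :=
  [forall k : 'I_n, is_min_label lab (pjoin s k) (pjoin s k.+1) (tnth s k)].

(* abstract simplicial complexes on L as sets of faces *)
Definition generated (Fs : {set {set L}}) : {set {set L}} :=
  [set G : {set L} | [exists F in Fs, G \subset F]].

Definition is_ordering n (B : {set L}) (s : n.-tuple L) : bool := perm_eq s (enum B).

Definition Sigma n (B : {set L}) : {set {set L}} :=
  generated [set assoc_facet s | s : n.-tuple L & is_ordering B s].

Definition Delta (lab : L -> nat) n (B : {set L}) : {set {set L}} :=
  generated [set assoc_facet s | s : n.-tuple L & is_ordering B s && minlab_eq lab s].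

Definition facets (K : {set {set L}}) : {set {set L}} :=
  [set F in K | [forall G in K, (F \subset G) ==> (G == F)]].

(* boundary of a pure complex K whose facets have d vertices (dimension d-1):
   the subcomplex generated by the (d-1)-vertex faces lying in exactly one facet *)
Definition boundary (K : {set {set L}}) (d : nat) : {set {set L}} :=
  generated [set H in K | (#|H| == d.-1) && (#|[set F in facets K | H \subset F]| == 1)].

End GeomLattice.

(* Main.v *)
Require Import Defs.
From mathcomp Require Import all_boot all_order.
From mathcomp Require Import zify.
From mathcomp Require Import fingroup perm.
Set Implicit Arguments. Unset Strict Implicit. Unset Printing Implicit Defensive.
Import Order.TTheory.
Local Open Scope order_scope.

Section Main.
Variables (disp : Order.disp_t) (L : finTBLatticeType disp)
    (rk : L -> nat) (r : nat) (lab : L -> nat).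
Implicit Types (a b x y z : L) (B G H F : {set L}).
Hypothesis Hgeom : geometric rk.
Hypothesis Hrank : rk \top = r.+1.
Hypothesis Hlab : {in [pred a | atom a] &, injective lab}.

Lemma rk0 : rk \bot = 0%N. Proof. by case: Hgeom => [[]]. Qed.
Lemma rk_cov x y : covers x y -> rk y = (rk x).+1.
Proof. by case: Hgeom => [[_ H]] _; apply: H. Qed.
Lemma rk_semi x y : (rk (x `|` y) + rk (x `&` y) <= rk x + rk y)%N.
Proof. by case: Hgeom => _ [_ H]; apply: H. Qed.
Lemma Hatomic : atomic L. Proof. by case: Hgeom => _ []. Qed.

Lemma rk_lt x y : x < y -> (rk x < rk y)%N.
Proof.
move=> xy; move: {2}#|_| (erefl #|[set z | x < z & z <= y]|) => n.
elim: n {-2}n (leqnn n) x y xy => [|N IH] n Hn x y xy Hc.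
  have : y \in [set z | x < z & z <= y] by rewrite inE xy lexx.
  move=> yin; have : exists z, z \in [set z | x < z & z <= y] by exists y.
  by move/card_gt0P; rewrite Hc; case: n Hn {Hc}.
have [cov|ncov] := boolP (covers x y); first by rewrite (rk_cov cov).
have [z /andP[xz zy]] : exists z, (x < z) && (z < y).
  move: ncov; rewrite /covers xy /=; move/forallPn => [z]; rewrite negbK => h; by exists z.
have h1 : (rk x < rk z)%N.
  apply: (IH #|[set w | x < w & w <= z]|) => //; rewrite -ltnS; apply: leq_trans Hn.
  rewrite -Hc; apply: proper_card; apply/properP; split.
    by apply/subsetP => w; rewrite !inE => /andP[-> wz] /=; apply: le_trans wz (ltW zy).
  exists y; first by rewrite inE xy lexx.
  by rewrite inE xy /= lt_geF.
have h2 : (rk z < rk y)%N.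
  apply: (IH #|[set w | z < w & w <= y]|) => //; rewrite -ltnS; apply: leq_trans Hn.
  rewrite -Hc; apply: proper_card; apply/properP; split.
    by apply/subsetP => w; rewrite !inE => /andP[zw ->]; rewrite andbT; apply: lt_trans zw.
  exists z; first by rewrite inE xz (ltW zy).
  by rewrite inE ltxx.
by apply: ltn_trans h2.
Qed.


Lemma rk_le x y : x <= y -> (rk x <= rk y)%N.
Proof. by rewrite le_eqVlt => /orP[/eqP->//|/rk_lt/ltnW]. Qed.

Lemma rk_eq x y : x <= y -> rk x = rk y -> x = y.
Proof.
rewrite le_eqVlt => /orP[/eqP->//|/rk_lt]; by move=> h e; rewrite e ltnn in h.
Qed.

Lemma rk_atom a : atom a -> rk a = 1%N.
Proof. by move=> /rk_cov ->; rewrite rk0. Qed.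

Lemma atom_meet a x : atom a -> ~~ (a <= x) -> x `&` a = \bot.
Proof.
move=> /andP[_ /forallP H] nax; have := H (x `&` a).
rewrite negb_and; case/orP.
  by rewrite lt_neqAle le0x andbT negbK => /eqP <-.
rewrite lt_neqAle leIr andbT negbK => /eqP e.
by move: nax; rewrite -e leIl.
Qed.

Lemma rk_joinA_le a x : atom a -> (rk (x `|` a) <= (rk x).+1)%N.
Proof.
move=> aa; have [ax|nax] := boolP (a <= x).
  by rewrite (join_idPl ax) leqnSn.
by have := rk_semi x a; rewrite atom_meet // rk0 addn0 (rk_atom aa) addn1.
Qed.

Lemma rk_joinA a x : atom a -> ~~ (a <= x) -> rk (x `|` a) = (rk x).+1.
Proof.
move=> aa nax; apply/eqP; rewrite eqn_leq rk_joinA_le //=.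
apply: rk_lt; rewrite lt_neqAle leUl andbT; apply/negP => /eqP e.
by move: nax; rewrite e leUr.
Qed.

Lemma atom_below x y : x < y -> exists a, [&& atom a, a <= y & ~~ (a <= x)].
Proof.
move=> xy; suff: [exists a, [&& atom a, a <= y & ~~ (a <= x)]] by case/existsP => a h; exists a.
apply: contraT => /existsPn H.
have : y <= x.
  rewrite (Hatomic y); apply/joinsP => a /andP[aa ay].
  by have := H a; rewrite aa ay /= negbK.
by rewrite lt_geF.
Qed.

Lemma cov_join x y b : x <= y -> rk y = (rk x).+1 -> atom b ->
  (x `|` b == y) = (b <= y) && ~~ (b <= x).
Proof.
move=> xy ry ab; apply/idP/idP.
  move=> /eqP e; rewrite -e leUr /=; apply/negP => bx.
  by move: ry; rewrite -e (join_idPl bx) => /n_Sn.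
case/andP=> hby nbx; apply/eqP; apply: rk_eq; first by rewrite leUx xy hby.
by rewrite rk_joinA.
Qed.

Lemma minlab_uniq x y a b : is_min_label lab x y a -> is_min_label lab x y b -> a = b.
Proof.
case/and3P=> aa ea /forallP Ha; case/and3P=> ab eb /forallP Hb.
apply: Hlab => //; apply/eqP; rewrite eqn_leq.
by rewrite (implyP (Ha b)) ?ab ?eb // (implyP (Hb a)) ?aa ?ea.
Qed.

Lemma minlab_ex x y : (exists b, atom b && (x `|` b == y)) -> exists a, is_min_label lab x y a.
Proof.
case=> b0 Hb0.
case: (arg_minnP (P := fun b => atom b && (x `|` b == y)) lab Hb0) => a /andP[aa ea] Ha.
exists a; rewrite /is_min_label aa ea /=; apply/forallP => b; apply/implyP; exact: Ha.
Qed.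


Lemma pjoinE m (s : m.-tuple L) k : pjoin s k = \join_(i < m | (i < k)%N) tnth s i.
Proof.
elim: k => [|k IH]; first by rewrite /pjoin take0 big_nil big_pred0.
have [hk|hk] := ltnP k m.
  rewrite /pjoin (take_nth \bot) ?size_tuple // big_rcons /= -/(pjoin s k) IH.
  rewrite [RHS](bigD1 (Ordinal hk)) //= joinC; congr (_ `|` _).
    by rewrite (tnth_nth \bot).
  by apply: eq_bigl => i; rewrite ltnS -val_eqE /= andbC -ltn_neqAle.
rewrite /pjoin in IH *; rewrite take_oversize ?size_tuple ?(leq_trans hk) //.
rewrite take_oversize ?size_tuple // in IH; rewrite IH; apply: eq_bigl => i.
have hi := leq_trans (ltn_ord i) hk; by rewrite hi ltnS ltnW.
Qed.


Section Tup.
Variable m : nat.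
Implicit Types (s t : m.-tuple L).

Lemma pjoin0 s : pjoin s 0 = \bot.
Proof. by rewrite pjoinE big_pred0. Qed.

Lemma pjoinS s (i : 'I_m) : pjoin s i.+1 = pjoin s i `|` tnth s i.
Proof.
rewrite !pjoinE (bigD1 i) //= joinC; congr (_ `|` _).
by apply: eq_bigl => j; rewrite ltnS andbC -ltn_neqAle.
Qed.

Lemma pjoin_mono s j k : (j <= k)%N -> pjoin s j <= pjoin s k.
Proof.
move=> jk; rewrite !pjoinE; apply/joinsP => i ij.
by apply: joins_sup; apply: leq_trans jk.
Qed.

Lemma tnth_le_pjoin s (i : 'I_m) k : (i < k)%N -> tnth s i <= pjoin s k.
Proof. by move=> ik; rewrite pjoinE; apply: joins_sup. Qed.

Lemma pjoin_agree s t k : (forall i : 'I_m, (i < k)%N -> tnth s i = tnth t i) ->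
  pjoin s k = pjoin t k.
Proof. by move=> H; rewrite !pjoinE; apply: eq_bigr. Qed.

Lemma pjoin_split s j k : (j <= k)%N ->
  pjoin s k = pjoin s j `|` \join_(i < m | (j <= i < k)%N) tnth s i.
Proof.
move=> jk; rewrite !pjoinE (bigID (fun i : 'I_m => (i < j)%N)) /=; congr (_ `|` _).
  apply: eq_bigl => i; apply/andP/idP; first by case.
  by move=> ij; split=> //; apply: leq_trans ij jk.
by apply: eq_bigl => i; rewrite -leqNgt andbC.
Qed.

Lemma pjoin_agree_above s t j k : (j <= k)%N -> pjoin s j = pjoin t j ->
  (forall i : 'I_m, (j <= i)%N -> tnth s i = tnth t i) -> pjoin s k = pjoin t k.
Proof.
move=> jk e H; rewrite (pjoin_split s jk) (pjoin_split t jk) e; congr (_ `|` _).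
by apply: eq_bigr => i /andP[] /H.
Qed.

Lemma pjoin_full s : pjoin s m = \join_(a <- s) a.
Proof. by rewrite /pjoin take_oversize ?size_tuple. Qed.

Lemma pjoin_perm s (B : {set L}) : perm_eq s (enum B) -> pjoin s m = joinS B.
Proof. by move=> p; rewrite pjoin_full (perm_big _ p) big_enum. Qed.

Lemma mem_take_le s k x : x \in take k s -> x <= pjoin s k.
Proof. by move=> h; rewrite /pjoin; apply: joins_sup_seq. Qed.

End Tup.


Definition spanning (s : r.+1.-tuple L) := all (@atom _ L) s && (pjoin s r.+1 == \top).

Section Span.
Variable s : r.+1.-tuple L.
Hypothesis Hs : spanning s.

Lemma span_atom i : atom (tnth s i).
Proof. by case/andP: Hs => /all_tnthP. Qed.

Lemma span_top : pjoin s r.+1 = \top.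
Proof. by case/andP: Hs => _ /eqP. Qed.

Lemma span_rk_le k : (k <= r.+1)%N -> (rk (pjoin s k) <= k)%N.
Proof.
elim: k => [|k IH] hk; first by rewrite pjoin0 rk0.
have := pjoinS s (Ordinal hk) => /= ->.
by apply: leq_trans (rk_joinA_le _ (span_atom _)) _; rewrite ltnS IH // ltnW.
Qed.

Lemma span_rk_gap j k : (k <= j)%N -> (j <= r.+1)%N ->
  (rk (pjoin s j) <= rk (pjoin s k) + (j - k))%N.
Proof.
elim: j => [|j IH] kj hj; first by move: kj; rewrite leqn0 => /eqP ->; rewrite subnn addn0.
rewrite leq_eqVlt in kj; case/orP: kj => [/eqP->|kj]; first by rewrite subnn addn0.
rewrite ltnS in kj.
have := pjoinS s (Ordinal hj) => /= ->.
apply: leq_trans (rk_joinA_le _ (span_atom _)) _.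
by rewrite subSn // addnS ltnS IH // ltnW.
Qed.

Lemma span_rk k : (k <= r.+1)%N -> rk (pjoin s k) = k.
Proof.
move=> hk; apply/eqP; rewrite eqn_leq span_rk_le //=.
have := span_rk_gap hk (leqnn _); rewrite span_top Hrank.
lia.
Qed.

Lemma span_new (i : 'I_r.+1) : ~~ (tnth s i <= pjoin s i).
Proof.
apply/negP => h; have := span_rk (ltn_ord i); rewrite pjoinS (join_idPl h).
by rewrite span_rk ?(ltnW (ltn_ord i)) // => /n_Sn.
Qed.

Lemma span_new_le (i : 'I_r.+1) k : (k <= i)%N -> ~~ (tnth s i <= pjoin s k).
Proof.
move=> ki; apply/negP => h; have := span_new i.
by rewrite (le_trans h (pjoin_mono _ ki)).
Qed.

Lemma span_uniq : uniq s.
Proof.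
apply/tuple_uniqP => i j e; apply/eqP; apply: contraT => ne.
wlog ij : i j e ne / (i < j)%N.
  move=> W; case: (ltngtP i j) => h; first exact: (W i j e ne h).
    by apply: (W j i (esym e) _ h); rewrite eq_sym.
  by move: ne; rewrite -val_eqE /= h eqxx.
have := span_new j; by rewrite -e tnth_le_pjoin.
Qed.

Lemma span_pjoin_inj j k : (j <= r.+1)%N -> (k <= r.+1)%N ->
  pjoin s j = pjoin s k -> j = k.
Proof. by move=> hj hk e; rewrite -(span_rk hj) -(span_rk hk) e. Qed.

End Span.

Lemma ord_span (B : {set L}) (s : r.+1.-tuple L) :
  basis r.+1 B -> is_ordering B s -> spanning s.
Proof.
case/andP => /andP[/forallP aB _] /eqP jB p.
rewrite /spanning (pjoin_perm p) jB eqxx andbT.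
apply/allP => x; rewrite (perm_mem p) mem_enum => xB.
by have := aB x; rewrite xB.
Qed.


Lemma circuit_span (C : {set L}) c : circuit rk C -> c \in C -> c <= joinS (C :\ c).
Proof.
case/andP => /andP[aC dC] /forallP H cC.
have := H (C :\ c); rewrite properD1 //= /dependent.
have aC' : atoms_set (C :\ c).
  apply/forallP => x; apply/implyP => /setD1P[_ xC].
  by move/forallP: aC => /(_ x); rewrite xC.
have ac : atom c by move/forallP: aC => /(_ c); rewrite cC.
rewrite aC' /= -leqNgt => hle; apply: contraT => nc.
move: dC; rewrite /joinS (bigD1 c) //= joinC -/(joinS (C :\ c)).
have -> : \join_(i in C | i != c) i = joinS (C :\ c).
  by apply: eq_bigl => x; rewrite !inE andbC.
rewrite rk_joinA // (cardsD1 c C) cC add1n ltnS.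
by rewrite leqNgt ltnS hle.
Qed.

Lemma join_seq_set (s : seq L) : joinS [set x in s] = \join_(a <- s) a.
Proof.
by rewrite /joinS joins_seq; apply: eq_bigl => x; rewrite inE.
Qed.

Lemma span_basis (s : r.+1.-tuple L) : spanning s -> basis r.+1 [set x in s].
Proof.
move=> Hs; rewrite /basis; apply/andP; split; first apply/andP; first split.
- apply/forallP => x; apply/implyP; rewrite inE => /(nthP \bot) [i hi <-].
  have hi' : (i < r.+1)%N by rewrite -(size_tuple s).
  have := span_atom Hs (Ordinal hi').
  by rewrite (tnth_nth \bot).
- by rewrite cardsE (card_uniqP (span_uniq Hs)) size_tuple.
- by rewrite join_seq_set -pjoin_full span_top.
Qed.

Lemma span_nbc (s : r.+1.-tuple L) : spanning s -> minlab_eq lab s ->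
  nbc_basis rk lab r.+1 [set x in s].
Proof.
move=> Hs Hm; rewrite /nbc_basis span_basis //=.
apply/forallP => D; apply/implyP => /existsP [C /andP[cC /existsP[a /andP[aC /andP[/forallP amin /eqP eD]]]]].
apply/negP => DS.
have atC : forall x, x \in C -> atom x.
  by move=> x xC; case/andP: cC => /andP[/forallP h _] _; have := h x; rewrite xC.
have aa := atC a aC.
have Dne : D != set0.
  apply/negP => /eqP D0; have := circuit_span cC aC; rewrite -eD D0 /joinS big_set0.
  by move=> h; move: aa => /andP[+ _]; rewrite lt_neqAle eq_le h le0x.
have exP : exists k, D \subset [set x in take k s].
  exists r.+1; rewrite take_oversize ?size_tuple //.
case: (ex_minnP exP) => m0 Pm0 Hmin.
have m0le : (m0 <= r.+1)%N by apply: Hmin; rewrite take_oversize ?size_tuple.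
case: m0 Pm0 Hmin m0le => [|k] Pk Hmin hk.
  by move: Dne; case/set0Pn => x xD; move/subsetP: Pk => /(_ x xD); rewrite inE take0.
set i := Ordinal hk.
have tk : take k.+1 s = rcons (take k s) (tnth s i).
  by rewrite (take_nth \bot) ?size_tuple // (tnth_nth \bot).
have Dk : forall e, e \in D -> e = tnth s i \/ e \in take k s.
  move=> e eD'; move/subsetP: Pk => /(_ e eD'); rewrite inE tk mem_rcons inE.
  by case/orP => [/eqP->|]; [left|right].
have siD : tnth s i \in D.
  have : ~~ (D \subset [set x in take k s]).
    by apply/negP => /Hmin; rewrite ltnn.
  case/subsetPn => e eD' ne; case: (Dk e eD') => [<-//|h].
  by move: ne; rewrite inE h.
set X := pjoin s k.
have hY : pjoin s k.+1 = X `|` tnth s i by rewrite (pjoinS s i).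
have aY : a <= pjoin s k.+1.
  apply: le_trans (circuit_span cC aC) _; rewrite -eD /joinS.
  apply/joinsP => e eD'; case: (Dk e eD') => [->|h].
    by apply: tnth_le_pjoin.
  by apply: le_trans (mem_take_le h) (pjoin_mono _ (leqnSn _)).
have aX : ~~ (a <= X).
  apply/negP => aX; have siC : tnth s i \in C by move: siD; rewrite eD => /setD1P[].
  have := circuit_span cC siC => h.
  have : tnth s i <= X.
    apply: le_trans h _; apply/joinsP => e /setD1P[ne eC].
    have [ea|nea] := eqVneq e a; first by rewrite ea.
    have eD' : e \in D by rewrite eD; apply/setD1P.
    by case: (Dk e eD') => [eq|h']; [move: ne; rewrite eq eqxx|apply: mem_take_le].
  by move/negP: (span_new Hs i).
have rXY : rk (pjoin s k.+1) = (rk X).+1 by rewrite !span_rk // ltnW.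
have XY : X <= pjoin s k.+1 by apply: pjoin_mono.
have cov : X `|` a == pjoin s k.+1 by rewrite cov_join // aY aX.
have := Hm; move/forallP => /(_ i) /and3P[_ _ /forallP /(_ a)].
rewrite aa /= cov /= => l1.
have l2 : (lab a <= lab (tnth s i))%N.
  by have := amin (tnth s i); rewrite (subsetP (subsetDl C [set a])) //; rewrite -eD.
have e : a = tnth s i.
  apply: Hlab; rewrite ?inE //; first exact: span_atom.
  by apply/eqP; rewrite eqn_leq l1 l2.
by move: siD; rewrite eD e !inE eqxx.
Qed.


Lemma lexlt_wit (s t : seq nat) : sorted leq t -> uniq s -> uniq t -> size s = size t ->
  lexlt s t -> exists x : nat, [/\ x \in s, x \notin t & forall y : nat, y \in t -> (y < x)%N -> y \in s].
Proof.
elim: s t => [|x s IH] [|y t] //= st us ut /eqP; rewrite eqSS => /eqP sz.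
case/orP => [xy|/andP[/eqP exy lst]].
  exists x; split; first by rewrite inE eqxx.
    rewrite inE negb_or (ltn_eqF xy) /=; apply/negP => xt.
    have := order_path_min leq_trans st => /allP /(_ x xt).
    by rewrite leqNgt xy.
  move=> z; rewrite inE => /orP[/eqP->|zt]; first by rewrite ltnNge ltnW.
  have := order_path_min leq_trans st => /allP /(_ z zt) yz zx.
  by have := leq_trans (leq_ltn_trans yz zx) (ltnW xy); rewrite ltnn.
case/andP: us => xs us; case/andP: ut => yt ut.
have st' : sorted leq t by apply: path_sorted st.
case: (IH t st' us ut sz lst) => z [zs zt H].
exists z; split.
- by rewrite inE zs orbT.
- rewrite inE negb_or zt andbT; apply/negP => /eqP ezy.
  by move: xs; rewrite exy -ezy zs.
- move=> w; rewrite inE => /orP[/eqP->|wt] wz; first by rewrite -exy inE eqxx.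
  by rewrite inE H ?orbT.
Qed.

Lemma wit_lexlt (s t : seq nat) : sorted leq s -> uniq s -> uniq t -> size s = size t ->
  (exists x : nat, [/\ x \in s, x \notin t & forall y : nat, y \in t -> (y < x)%N -> y \in s]) ->
  lexlt s t.
Proof.
elim: s t => [|x s IH] [|y t] //=; first by move=> _ _ _ _ [x []].
move=> ss us ut /eqP; rewrite eqSS => /eqP sz [z [zs zt H]].
case: (ltngtP x y) => [//|yx|exy].
  have : y \in x :: s by apply: H; rewrite ?inE ?eqxx //; apply: (leq_trans yx);
    move: zs; rewrite inE => /orP[/eqP->//|zs];
    have := order_path_min leq_trans ss => /allP /(_ z zs).
  rewrite inE => /orP[/eqP e|ys]; first by move: yx; rewrite e ltnn.
  have := order_path_min leq_trans ss => /allP /(_ y ys).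
  by rewrite leqNgt yx.
rewrite /=; case/andP: us => xs us; case/andP: ut => yt ut.
apply: (IH t (path_sorted ss) us ut sz); exists z; split.
- move: zs; rewrite inE => /orP[/eqP e|//]; by move: zt; rewrite e exy inE eqxx.
- by move: zt; rewrite inE negb_or => /andP[].
- move=> w wt wz; have := H w; rewrite inE wt orbT => /(_ isT wz).
  rewrite inE => /orP[/eqP e|//]; by move: yt; rewrite -exy -e wt.
Qed.


Lemma atoms_setP (B : {set L}) : atoms_set B -> forall a, a \in B -> atom a.
Proof. by move=> /forallP H a aB; have := H a; rewrite aB. Qed.

Lemma labseq_mem (B : {set L}) a : atoms_set B -> atom a ->
  (lab a \in labseq lab B) = (a \in B).
Proof.
move=> aB aa; rewrite /labseq mem_sort; apply/mapP/idP.
  case=> b; rewrite mem_enum => bB e.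
  by rewrite (Hlab _ _ e) // inE; apply: (atoms_setP aB).
by move=> h; exists a; rewrite ?mem_enum.
Qed.

Lemma labseq_sorted B : sorted leq (labseq lab B).
Proof. by apply: sort_sorted; exact: leq_total. Qed.

Lemma labseq_uniq (B : {set L}) : atoms_set B -> uniq (labseq lab B).
Proof.
move=> aB; rewrite /labseq sort_uniq map_inj_in_uniq ?enum_uniq //.
move=> x y; rewrite !mem_enum => xB yB; apply: Hlab; rewrite inE; exact: (atoms_setP aB).
Qed.

Lemma labseq_size B : size (labseq lab B) = #|B|.
Proof. by rewrite /labseq size_sort size_map cardE. Qed.

Lemma lex_sets (B B' : {set L}) : atoms_set B -> atoms_set B' -> #|B| = #|B'| ->
  lexlt (labseq lab B') (labseq lab B) <->
  exists a, [/\ a \in B', a \notin B & forall b, b \in B -> (lab b < lab a)%N -> b \in B'].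
Proof.
move=> aB aB' cB; split.
  move/lexlt_wit => /(_ (labseq_sorted B) (labseq_uniq aB') (labseq_uniq aB)).
  rewrite !labseq_size => /(_ (esym cB)) [x [xs xt H]].
  move: (xs); rewrite /labseq mem_sort => /mapP [a]; rewrite mem_enum => aB'' ex.
  have aa : atom a by apply: (atoms_setP aB').
  exists a; split => //.
    by rewrite -(labseq_mem aB aa) -ex.
  move=> b bB lb; have ab : atom b by apply: (atoms_setP aB).
  by rewrite -(labseq_mem aB' ab) H ?labseq_mem // ex.
case=> a [aB'' naB H]; have aa : atom a by apply: (atoms_setP aB').
apply: wit_lexlt; rewrite ?labseq_sorted ?labseq_uniq ?labseq_size //.
exists (lab a); split; rewrite ?labseq_mem //.
move=> y; rewrite {1}/labseq mem_sort => /mapP [b]; rewrite mem_enum => bB -> lb.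
have ab : atom b by apply: (atoms_setP aB).
by rewrite labseq_mem // H.
Qed.


Lemma ml_intro X Y a : X <= Y -> rk Y = (rk X).+1 -> atom a -> a <= Y -> ~~ (a <= X) ->
  (forall b, atom b -> b <= Y -> ~~ (b <= X) -> (lab a <= lab b)%N) ->
  is_min_label lab X Y a.
Proof.
move=> XY rXY aa aY aX H; rewrite /is_min_label aa cov_join // aY aX /=.
apply/forallP => b; apply/implyP => /andP[ab]; rewrite cov_join // => /andP[bY bX].
exact: H.
Qed.

Lemma ml_elim X Y a : X <= Y -> rk Y = (rk X).+1 -> is_min_label lab X Y a ->
  [/\ atom a, a <= Y, ~~ (a <= X) &
  forall b, atom b -> b <= Y -> ~~ (b <= X) -> (lab a <= lab b)%N].
Proof.
move=> XY rXY /and3P[aa]; rewrite cov_join // => /andP[aY aX] /forallP H; split => //.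
move=> b ab bY bX; have := H b; rewrite ab cov_join // bY bX; exact.
Qed.

Definition upd2 (s : r.+1.-tuple L) (k : nat) (u v : L) : r.+1.-tuple L :=
  [tuple if val i == k then u else if val i == k.+1 then v else tnth s i | i < r.+1].

Definition facet_of (s : r.+1.-tuple L) := assoc_facet s.

Lemma in_facet (s : r.+1.-tuple L) x :
  (x \in assoc_facet s) = [exists k : 'I_r, x == pjoin s k.+1].
Proof.
apply/imsetP/existsP => [[k _ ->]|[k /eqP ->]]; first by exists k.
by exists k.
Qed.

Lemma facet_rk (s : r.+1.-tuple L) x : spanning s -> x \in assoc_facet s ->
  [/\ (0 < rk x)%N, (rk x <= r)%N & x = pjoin s (rk x)].
Proof.
move=> Hs; rewrite in_facet => /existsP [k /eqP ->].
by rewrite span_rk ?ltnS ?ltn_ord // ltnW.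
Qed.

Lemma pjoin_in_facet (s : r.+1.-tuple L) j : (0 < j)%N -> (j <= r)%N ->
  pjoin s j \in assoc_facet s.
Proof.
case: j => // j _ hj; rewrite in_facet; apply/existsP; exists (Ordinal hj); by [].
Qed.

Lemma card_facet (s : r.+1.-tuple L) : spanning s -> #|assoc_facet s| = r.
Proof.
move=> Hs; rewrite /assoc_facet card_imset ?card_ord //.
move=> i j e; apply/val_inj.
have h : ((i:nat).+1 <= r.+1)%N by rewrite ltnS ltnW.
have h' : ((j:nat).+1 <= r.+1)%N by rewrite ltnS ltnW.
by have [] := span_pjoin_inj Hs h h' e.
Qed.


Section Upd.
Variables (s : r.+1.-tuple L) (k : nat) (u' v' : L).
Hypothesis hk : (k < r)%N.
Let t := upd2 s k u' v'.

Lemma tnth_upd2 i : tnth t i = if val i == k then u' else if val i == k.+1 then v' else tnth s i.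
Proof. by rewrite tnth_mktuple. Qed.

Lemma pjoin_upd2_lo j : (j <= k)%N -> pjoin t j = pjoin s j.
Proof.
move=> jk; apply: pjoin_agree => i ij; rewrite tnth_upd2.
by rewrite !ltn_eqF // ?(leq_trans ij jk) // (leq_trans ij) // ltnW.
Qed.

Lemma pjoin_upd2_k1 : pjoin t k.+1 = pjoin s k `|` u'.
Proof.
have h : (k < r.+1)%N by apply: ltnW.
by rewrite (pjoinS t (Ordinal h)) pjoin_upd2_lo // tnth_upd2 /= eqxx.
Qed.

Lemma pjoin_upd2_k2 : pjoin t k.+2 = pjoin s k `|` u' `|` v'.
Proof.
have h : (k.+1 < r.+1)%N by [].
by rewrite (pjoinS t (Ordinal h)) pjoin_upd2_k1 tnth_upd2 /= eqxx (gtn_eqF (ltnSn k)).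
Qed.

Lemma pjoin_upd2_hi j : pjoin s k `|` u' `|` v' = pjoin s k.+2 -> (k.+2 <= j)%N ->
  pjoin t j = pjoin s j.
Proof.
move=> e kj; apply: (pjoin_agree_above kj); first by rewrite pjoin_upd2_k2.
move=> i ki; rewrite tnth_upd2 (gtn_eqF (leq_trans (leqnSn _) ki)).
by rewrite gtn_eqF.
Qed.

Hypothesis Hs : spanning s.
Hypothesis Hm : minlab_eq lab s.
Hypothesis au : atom u'.
Hypothesis av : atom v'.
Hypothesis m1 : is_min_label lab (pjoin s k) (pjoin s k `|` u') u'.
Hypothesis m2 : is_min_label lab (pjoin s k `|` u') (pjoin s k.+2) v'.

Lemma upd2_X2 : pjoin s k `|` u' `|` v' = pjoin s k.+2.
Proof. by case/and3P: m2 => _ /eqP. Qed.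

Lemma upd2_span : spanning t.
Proof.
apply/andP; split.
  apply/all_tnthP => i; rewrite tnth_upd2.
  by case: ifP => // _; case: ifP => // _; apply: span_atom.
by rewrite (pjoin_upd2_hi upd2_X2) // span_top.
Qed.

Lemma upd2_minlab : minlab_eq lab t.
Proof.
apply/forallP => i; rewrite tnth_upd2.
case: (ltngtP i k) => ik.
- rewrite !pjoin_upd2_lo // ?(ltnW ik) //; have := Hm; move/forallP => /(_ i).
  by case: ifP => // /eqP e; move: ik; rewrite e ltnNge leqnSn.
- case: (ltngtP i k.+1) => ik1.
  + by move: ik1; rewrite ltnS leqNgt ik.
  + rewrite !pjoin_upd2_hi ?upd2_X2 // ?(ltnW ik1) //.
    by have := Hm; move/forallP => /(_ i).
  + by rewrite ik1 pjoin_upd2_k1 pjoin_upd2_k2 upd2_X2.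
- by rewrite ik pjoin_upd2_lo // pjoin_upd2_k1.
Qed.

End Upd.


Section Window.
Variables (s : r.+1.-tuple L) (k : nat).
Hypotheses (Hs : spanning s) (Hm : minlab_eq lab s) (hk : (k < r)%N).
Definition wi0 : 'I_r.+1 := @Ordinal r.+1 k (ltnW hk).
Definition wi1 : 'I_r.+1 := @Ordinal r.+1 k.+1 hk.
Local Notation X0 := (pjoin s k).
Local Notation X1 := (pjoin s k.+1).
Local Notation X2 := (pjoin s k.+2).
Local Notation u := (tnth s wi0).
Local Notation v := (tnth s wi1).
Local Notation p := (pjoin s k `|` tnth s wi1).

Lemma w_rX1 : rk X1 = (rk X0).+1.
Proof. have h0 : (k < r.+1)%N := ltnW hk. by rewrite (span_rk Hs h0) (span_rk Hs (ltnW h0)). Qed.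
Lemma w_rX2 : rk X2 = (rk X1).+1.
Proof. have h0 : (k < r.+1)%N := ltnW hk. by rewrite (@span_rk s Hs k.+2 hk) (span_rk Hs h0). Qed.
Lemma w_X01 : X0 <= X1. Proof. exact: pjoin_mono. Qed.
Lemma w_X12 : X1 <= X2. Proof. exact: pjoin_mono. Qed.
Lemma w_hX1 : X1 = X0 `|` u. Proof. exact: (pjoinS s wi0). Qed.
Lemma w_hX2 : X2 = X1 `|` v. Proof. exact: (pjoinS s wi1). Qed.
Lemma w_ml0 : is_min_label lab X0 X1 u. Proof. by move/forallP: Hm => /(_ wi0). Qed.
Lemma w_ml1 : is_min_label lab X1 X2 v. Proof. by move/forallP: Hm => /(_ wi1). Qed.
Lemma w_au : atom u. Proof. exact: span_atom. Qed.
Lemma w_av : atom v. Proof. exact: span_atom. Qed.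
Lemma w_u0 : ~~ (u <= X0). Proof. exact: (span_new Hs wi0). Qed.
Lemma w_v1 : ~~ (v <= X1). Proof. exact: (span_new Hs wi1). Qed.
Lemma w_v0 : ~~ (v <= X0).
Proof. by apply: span_new_le => //=; apply: leqnSn. Qed.
Lemma w_rp : rk p = (rk X0).+1. Proof. by rewrite rk_joinA ?w_av ?w_v0. Qed.
Lemma w_p2 : p <= X2.
Proof. by rewrite leUx (le_trans w_X01 w_X12) /= w_hX2 leUr. Qed.
Lemma w_X0p : X0 <= p. Proof. exact: leUl. Qed.
Lemma w_pX1 : p != X1.
Proof. by apply/eqP => e; move: w_v1; rewrite -e leUr. Qed.
Lemma w_up : ~~ (u <= p).
Proof.
apply/negP => up; have : X1 <= p by rewrite w_hX1 leUx w_X0p up.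
move=> h; have e := rk_eq h (etrans w_rX1 (esym w_rp)).
by move/eqP: w_pX1; rewrite e.
Qed.
Lemma w_rX2p : rk X2 = (rk p).+1. Proof. by rewrite w_rX2 w_rX1 w_rp. Qed.
Lemma w_pu : p `|` u = X2.
Proof.
apply: rk_eq; first by rewrite leUx w_p2 /=; apply: le_trans w_X12; rewrite w_hX1 leUr.
by rewrite rk_joinA ?w_au ?w_up // w_rX2p.
Qed.

Lemma w_lab b : atom b -> b <= X2 -> ~~ (b <= X0) ->
  (lab u <= lab b)%N || (lab v <= lab b)%N.
Proof.
move=> ab b2 b0; have [b1|b1] := boolP (b <= X1).
  by case: (ml_elim w_X01 w_rX1 w_ml0) => _ _ _ /(_ b ab b1 b0) ->.
by case: (ml_elim w_X12 w_rX2 w_ml1) => _ _ _ /(_ b ab b2 b1) ->; rewrite orbT.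
Qed.

Lemma w_mlpv : is_min_label lab X0 p v.
Proof.
apply: ml_intro; rewrite ?w_X0p ?w_rp ?w_av ?leUr ?w_v0 //.
move=> b ab bp b0; have [b1|b1] := boolP (b <= X1).
  have e1 : X0 `|` b = X1 by apply/eqP; rewrite cov_join ?w_X01 ?w_rX1 ?b1.
  have e2 : X0 `|` b = p by apply/eqP; rewrite cov_join ?w_X0p ?w_rp ?bp.
  by move/eqP: w_pX1; rewrite -e1 -e2.
by case: (ml_elim w_X12 w_rX2 w_ml1) => _ _ _ /(_ b ab (le_trans bp w_p2) b1).
Qed.

Lemma w_mlinc : (lab u < lab v)%N -> is_min_label lab p X2 u.
Proof.
move=> uv; apply: ml_intro; rewrite ?w_p2 ?w_rX2p ?w_au ?w_up //.
  by rewrite -w_pu leUr.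
move=> b ab b2 bp; have b0 : ~~ (b <= X0) by apply: contra bp => h; apply: le_trans h w_X0p.
by case/orP: (w_lab ab b2 b0) => // h; apply: leq_trans (ltnW uv) h.
Qed.

Lemma w_elems (j : 'I_r.+1) : tnth s j <= X2 -> ~~ (tnth s j <= X0) -> j = wi0 \/ j = wi1.
Proof.
move=> j2 j0; case: (ltngtP j k) => jk.
- by move: j0; rewrite tnth_le_pjoin.
- case: (ltngtP j k.+1) => jk1.
  + by move: jk1; rewrite ltnS leqNgt jk.
  + by move: j2; rewrite (negbTE (span_new_le Hs jk1)).
  + by right; apply: val_inj.
- by left; apply: val_inj.
Qed.

End Window.


Lemma upd2_perm (s : r.+1.-tuple L) k (hk : (k < r)%N) :
  perm_eq (upd2 s k (tnth s (wi1 hk)) (tnth s (wi0 hk))) s.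
Proof.
apply/tuple_permP; exists (tperm (wi0 hk) (wi1 hk)); apply: congr1; apply: eq_from_tnth => q.
rewrite tnth_upd2 tnth_mktuple.
have [e0|n0] := eqVneq (val q) k.
  have -> : q = wi0 hk by apply: val_inj.
  by rewrite tpermL.
have [e1|n1] := eqVneq (val q) k.+1.
  have -> : q = wi1 hk by apply: val_inj.
  by rewrite tpermR.
rewrite tpermD //; apply/negP => /eqP e; [move: n0|move: n1]; by rewrite -e eqxx.
Qed.

Definition weight (s : r.+1.-tuple L) := (\sum_(q < r.+1) q * lab (tnth s q))%N.

Lemma weight_split (t : r.+1.-tuple L) k (hk : (k < r)%N) :
  weight t = (k * lab (tnth t (wi0 hk)) + k.+1 * lab (tnth t (wi1 hk)) +
    \sum_(i < r.+1 | (i != wi0 hk) && (i != wi1 hk)) i * lab (tnth t i))%N.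
Proof.
have n01 : wi1 hk != wi0 hk by rewrite -val_eqE /= (gtn_eqF (ltnSn _)).
rewrite /weight (bigD1 (wi0 hk)) //= (bigD1 (wi1 hk)) //= addnA.
by congr (_ + _)%N; apply: eq_bigl => i; rewrite andbC.
Qed.

Lemma weight_swap (s : r.+1.-tuple L) k (hk : (k < r)%N) :
  (lab (tnth s (wi1 hk)) < lab (tnth s (wi0 hk)))%N ->
  (weight s < weight (upd2 s k (tnth s (wi1 hk)) (tnth s (wi0 hk))))%N.
Proof.
move=> lt; set t := upd2 _ _ _ _.
rewrite (weight_split s hk) (weight_split t hk).
have -> : (\sum_(i < r.+1 | (i != wi0 hk) && (i != wi1 hk)) i * lab (tnth t i) =
    \sum_(i < r.+1 | (i != wi0 hk) && (i != wi1 hk)) i * lab (tnth s i))%N.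
  apply: eq_bigr => q /andP[n0 n1]; rewrite tnth_upd2.
  rewrite ifF; last by apply/negP => /eqP e; move: n0; rewrite -val_eqE /= e eqxx.
  rewrite ifF //; by apply/negP => /eqP e; move: n1; rewrite -val_eqE /= e eqxx.
rewrite !tnth_upd2 /= eqxx (gtn_eqF (ltnSn _)) eqxx.
move: lt; set A := (\sum_(i < r.+1 | _) _)%N.
set a := lab (tnth s (wi0 hk)); set b := lab (tnth s (wi1 hk)).
move=> lt; nia.
Qed.


Definition goodB (B : {set L}) (s : r.+1.-tuple L) := is_ordering B s && minlab_eq lab s.

Lemma DeltaP B G : reflect (exists2 s, goodB B s & G \subset assoc_facet s)
  (G \in Delta lab r.+1 B).
Proof.
rewrite /Delta /generated inE; apply: (iffP existsP).
  by case=> F /andP[/imsetP[s]]; rewrite inE => Ps -> GF; exists s.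
case=> s Ps GF; exists (assoc_facet s); rewrite GF andbT.
by apply/imsetP; exists s; rewrite ?inE.
Qed.

Lemma ord_mem B (s : r.+1.-tuple L) x : is_ordering B s -> (x \in s) = (x \in B).
Proof. by move=> p; rewrite (perm_mem p) mem_enum. Qed.

Lemma perm_set_seq (s : r.+1.-tuple L) : uniq s -> is_ordering [set x in s] s.
Proof.
move=> us; apply: uniq_perm => //; first exact: enum_uniq.
by move=> x; rewrite mem_enum inE.
Qed.

Lemma facetsP B F : basis r.+1 B ->
  reflect (exists2 s, goodB B s & F = assoc_facet s) (F \in facets (Delta lab r.+1 B)).
Proof.
move=> hB; rewrite /facets inE; apply: (iffP andP).
  case=> /DeltaP [s Ps FS] /forallP H; exists s => //.
  have := H (assoc_facet s); rewrite FS /=.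
  have -> : assoc_facet s \in Delta lab r.+1 B by apply/DeltaP; exists s.
  by move=> /eqP.
case=> s Ps ->; split; first by apply/DeltaP; exists s.
apply/forallP => G; apply/implyP => /DeltaP [t Pt Gt]; apply/implyP => sG.
have Hs : spanning s by case/andP: Ps => o _; apply: ord_span o.
have Ht : spanning t by case/andP: Pt => o _; apply: ord_span o.
have e : assoc_facet s = assoc_facet t.
  apply/eqP; rewrite eqEcard (subset_trans sG Gt) /= !card_facet //.
by rewrite eqEsubset sG e Gt.
Qed.

Lemma ridge_agree (s t : r.+1.-tuple L) k : (k < r)%N -> spanning s -> spanning t ->
  assoc_facet s :\ pjoin s k.+1 \subset assoc_facet t ->
  forall j, (j <= r.+1)%N -> j != k.+1 -> pjoin t j = pjoin s j.
Proof.
move=> hk Hs Ht sub j hj nj.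
case: j hj nj => [|j] hj nj; first by rewrite !pjoin0.
have [ej|nej] := eqVneq j r; first by rewrite ej !span_top.
have hj' : (j.+1 <= r)%N by rewrite ltn_neqAle nej.
have mem : pjoin s j.+1 \in assoc_facet s :\ pjoin s k.+1.
  rewrite !inE pjoin_in_facet // andbT; apply/negP => /eqP e.
  have hk1 : (k.+1 <= r.+1)%N by rewrite ltnS ltnW.
  by have := span_pjoin_inj Hs hj hk1 e => /eqP; rewrite (negbTE nj).
case: (facet_rk Ht (subsetP sub _ mem)) => _ _.
by rewrite span_rk.
Qed.

Lemma ridge_sub (s t : r.+1.-tuple L) k :
  (forall j, (0 < j)%N -> (j <= r)%N -> j != k.+1 -> pjoin t j = pjoin s j) ->
  assoc_facet s :\ pjoin s k.+1 \subset assoc_facet t.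
Proof.
move=> H; apply/subsetP => x; rewrite !inE in_facet => /andP[nx /existsP[j /eqP xe]].
rewrite xe in nx *; rewrite -H ?pjoin_in_facet //; apply/negP => /eqP [e].
by move: nx; rewrite e eqxx.
Qed.

Lemma facet_eq (s t : r.+1.-tuple L) :
  (forall j, (0 < j)%N -> (j <= r)%N -> pjoin t j = pjoin s j) ->
  assoc_facet t = assoc_facet s.
Proof. by move=> H; apply: eq_imset => j; rewrite H // ltn_ord. Qed.


Lemma indep (s : r.+1.-tuple L) j0 : spanning s -> (j0 <= r.+1)%N ->
  forall m (T : {set L}), T \subset [set x in take m s] ->
  (forall x, x \in T -> ~~ (x <= pjoin s j0)) ->
  rk (pjoin s j0 `|` joinS T) = (j0 + #|T|)%N.
Proof.
move=> Hs hj0; elim=> [|m IH] T sub nle.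
  have -> : T = set0.
    by apply/setP => x; rewrite inE; apply/negP => /(subsetP sub); rewrite inE take0.
  by rewrite /joinS big_set0 joinx0 span_rk // cards0 addn0.
have [hm|hm] := leqP r.+1 m.
  apply: IH => //; apply: (subset_trans sub); apply/subsetP => x.
  by rewrite !inE !take_oversize ?size_tuple // ltnW.
set i := Ordinal hm.
have tk : take m.+1 s = rcons (take m s) (tnth s i).
  by rewrite (take_nth \bot) ?size_tuple // (tnth_nth \bot).
have [iT|niT] := boolP (tnth s i \in T); last first.
  apply: IH => //; apply/subsetP => x xT; have := subsetP sub x xT.
  rewrite !inE tk mem_rcons inE => /orP[/eqP e|//].
  by move: niT; rewrite -e xT.
have sub' : T :\ tnth s i \subset [set x in take m s].
  apply/subsetP => x /setD1P[nx xT]; have := subsetP sub x xT.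
  by rewrite !inE tk mem_rcons inE (negbTE nx).
have nle' : forall x, x \in T :\ tnth s i -> ~~ (x <= pjoin s j0).
  by move=> x /setD1P[_ /nle].
have IH' := IH _ sub' nle'.
have jm : (j0 <= m)%N.
  rewrite leqNgt; apply/negP => mj; have := nle _ iT.
  by rewrite tnth_le_pjoin.
set Z := pjoin s j0 `|` joinS (T :\ tnth s i).
have ZX : Z <= pjoin s m.
  rewrite leUx pjoin_mono //=; apply/joinsP => x xT.
  by apply: mem_take_le; move: (subsetP sub' x xT); rewrite inE.
have nZ : ~~ (tnth s i <= Z).
  by apply/negP => h; have := span_new Hs i; rewrite (le_trans h ZX).
have -> : pjoin s j0 `|` joinS T = Z `|` tnth s i.
  rewrite /Z /joinS (bigD1 (tnth s i)) //= -joinA [_ `|` tnth s i]joinC; congr (_ `|` (_ `|` _)).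
  by apply: eq_bigl => x; rewrite !inE andbC.
by rewrite rk_joinA ?span_atom // IH' (cardsD1 (tnth s i) T) iT add1n addnS.
Qed.

Lemma basis1 B : basis 1 B -> B = [set \top].
Proof.
case/andP => /andP[_ /cards1P[b ->]] /eqP; rewrite /joinS big_set1 => ->.
by [].
Qed.

Lemma lexlt_irr (l : seq nat) : lexlt l l = false.
Proof. by elim: l => //= x l ->; rewrite ltnn eqxx. Qed.


Lemma upd2_agree (s : r.+1.-tuple L) k u' v' (hk : (k < r)%N) :
  pjoin s k `|` u' `|` v' = pjoin s k.+2 ->
  forall j, j != k.+1 -> pjoin (upd2 s k u' v') j = pjoin s j.
Proof.
move=> e j nj; have [jk|jk] := leqP j k; first exact: pjoin_upd2_lo.
apply: pjoin_upd2_hi => //; rewrite ltn_neqAle eq_sym nj /=; exact: jk.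
Qed.

Lemma boundary_sub B G : G \in boundary (Delta lab r.+1 B) r -> G \in Delta lab r.+1 B.
Proof.
rewrite /boundary /generated inE => /existsP [H /andP[]]; rewrite inE => /andP[/DeltaP [s Ps Hs] _] GH.
by apply/DeltaP; exists s => //; apply: subset_trans Hs.
Qed.

Lemma dirA B G : nbc_basis rk lab r.+1 B -> (0 < r)%N ->
  G \in boundary (Delta lab r.+1 B) r ->
  exists B', [&& nbc_basis rk lab r.+1 B', lexlt (labseq lab B') (labseq lab B)
    & G \in Delta lab r.+1 B'].
Proof.
move=> nB rpos; have hB : basis r.+1 B by case/andP: nB.
rewrite /boundary /generated inE => /existsP [H /andP[]]; rewrite inE.
case/and3P => HK /eqP cH /cards1P [F eS] GH.
have : F \in [set F in facets (Delta lab r.+1 B) | H \subset F] by rewrite eS set11.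
rewrite inE => /andP[/(facetsP _ hB) [s /andP[os Hm] eF] HF].
rewrite eF in eS HF.
have Hs : spanning s := ord_span hB os.
have [x xF xH] : exists2 x, x \in assoc_facet s & x \notin H.
  apply/subsetPn; apply/negP => sub; have := subset_leq_card sub.
  by rewrite (card_facet Hs) cH; case: (r) rpos => // n _; rewrite /= ltnn.
have eH : H = assoc_facet s :\ x.
  apply/eqP; rewrite eqEcard subsetD1 HF xH /= cH.
  have := cardsD1 x (assoc_facet s); rewrite xF (card_facet Hs) add1n => e.
  move: (#|_ :\ _|) e => c e; rewrite e /=; exact: leqnn.
move: xF; rewrite in_facet => /existsP [k /eqP ex]; rewrite {x}ex in eH xH.
have hk : (k < r)%N := ltn_ord k.
set u := tnth s (wi0 hk); set v := tnth s (wi1 hk).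
have [lm|nlm] := boolP (is_min_label lab (pjoin s k `|` v) (pjoin s k.+2) u).
  exfalso; set sw := upd2 s k v u.
  have Hsw : spanning sw := upd2_span hk Hs (w_av Hs hk) (w_au Hs hk) lm.
  have Psw : goodB B sw.
    rewrite /goodB (upd2_minlab hk Hm (w_mlpv Hs Hm hk) lm) andbT.
    exact: perm_trans (upd2_perm s hk) os.
  have ag := upd2_agree hk (upd2_X2 lm).
  have Hsub : H \subset assoc_facet sw.
    by rewrite eH; apply: ridge_sub => j _ _; apply: ag.
  have : assoc_facet sw \in [set F in facets (Delta lab r.+1 B) | H \subset F].
    by rewrite inE Hsub andbT; apply/(facetsP _ hB); exists sw.
  rewrite eS inE => /eqP e.
  have := @pjoin_in_facet sw k.+1 (ltn0Sn k) hk.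
  rewrite e pjoin_upd2_k1 // => pin.
  case: (facet_rk Hs pin) => _ _; rewrite (w_rp Hs hk) (span_rk Hs (leqW (ltnW hk))) => e'.
  by move/eqP: (w_pX1 Hs hk); rewrite -e'.
have [l ml] : exists l, is_min_label lab (pjoin s k `|` v) (pjoin s k.+2) l.
  apply: minlab_ex; exists u; rewrite (w_au Hs hk) /=; apply/eqP; exact: w_pu.
case: (ml_elim (w_p2 s hk) (w_rX2p Hs hk) ml) => al l2 lp lmin.
have lu : (lab l < lab u)%N.
  rewrite ltn_neqAle lmin ?(w_au Hs hk) ?(w_up Hs hk) ?andbT //; last first.
    by rewrite -(w_pu Hs hk) leUr.
  apply/negP => /eqP e; have e' : l = u by apply: Hlab; rewrite ?inE ?(w_au Hs hk).
  by move: nlm; rewrite -e' ml.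
set t := upd2 s k v l.
have Ht : spanning t := upd2_span hk Hs (w_av Hs hk) al ml.
have Hmt : minlab_eq lab t := upd2_minlab hk Hm (w_mlpv Hs Hm hk) ml.
have bt : basis r.+1 [set x in t] := span_basis Ht.
exists [set x in t]; rewrite span_nbc //=; apply/andP; split.
  have aB1 : atoms_set B by case/andP: hB => /andP[].
  have aB2 : atoms_set [set x in t] by case/andP: bt => /andP[].
  have cB12 : #|B| = #|[set x in t]|.
    by case/andP: hB => /andP[_ /eqP ->]; case/andP: bt => /andP[_ /eqP ->].
  apply/(lex_sets aB1 aB2 cB12).
  exists l; split.
  - have -> : l = tnth t (wi1 hk) by rewrite tnth_upd2 /= (gtn_eqF (ltnSn _)) eqxx.
    by rewrite inE mem_tnth.
  - rewrite -(ord_mem _ os); apply/negP => /tnthP [j ej].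
    have j2 : tnth s j <= pjoin s k.+2 by rewrite -ej.
    have j0 : ~~ (tnth s j <= pjoin s k).
      by rewrite -ej; apply: contra lp => h; apply: le_trans h (leUl _ _).
    case: (w_elems Hs hk j2 j0) => ej'; rewrite ej' in ej.
      by move: lu; rewrite ej ltnn.
    by move: lp; rewrite ej leUr.
  - move=> b; rewrite -(ord_mem _ os) => /tnthP [j ->] lb.
    have [e0|n0] := eqVneq j (wi0 hk).
      by move: lb; rewrite e0 => /(ltn_trans lu); rewrite ltnn.
    have [e1|n1] := eqVneq j (wi1 hk).
      have -> : tnth s j = tnth t (wi0 hk) by rewrite tnth_upd2 /= eqxx e1.
      by rewrite inE mem_tnth.
    have -> : tnth s j = tnth t j.
      rewrite tnth_upd2 ifF; last by apply/negP => /eqP e; move: n0; rewrite -val_eqE /= e eqxx.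
      by rewrite ifF //; apply/negP => /eqP e; move: n1; rewrite -val_eqE /= e eqxx.
    by rewrite inE mem_tnth.
apply/DeltaP; exists t.
  by rewrite /goodB Hmt andbT; apply: perm_set_seq; apply: span_uniq.
apply: subset_trans GH _; rewrite eH; apply: ridge_sub => j _ _.
exact: upd2_agree hk (upd2_X2 ml) j.
Qed.



Lemma dirB B G B' : nbc_basis rk lab r.+1 B -> G \in Delta lab r.+1 B ->
  nbc_basis rk lab r.+1 B' -> lexlt (labseq lab B') (labseq lab B) ->
  G \in Delta lab r.+1 B' -> G \in boundary (Delta lab r.+1 B) r.
Proof.
move=> nB GD nB' lt GD'.
have hB : basis r.+1 B by case/andP: nB.
have hB' : basis r.+1 B' by case/andP: nB'.
have [s0 Ps0] : exists s0, goodB B s0 && (G \subset assoc_facet s0).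
  by case/DeltaP: GD => s0 P0 G0; exists s0; rewrite P0 G0.
case: (arg_maxnP (P := fun s => goodB B s && (G \subset assoc_facet s)) weight Ps0).
move=> s /andP[/andP[os Hm] Gs] smax.
have Hs : spanning s := ord_span hB os.
case/DeltaP: GD' => s' /andP[os' Hm'] Gs'.
have Hs' : spanning s' := ord_span hB' os'.
have [/existsP [k /andP[desc nG]]|none] := boolP [exists k : 'I_r,
   (lab (tnth s (wi1 (ltn_ord k))) < lab (tnth s (wi0 (ltn_ord k))))%N && (pjoin s k.+1 \notin G)].
  set hk := ltn_ord k in desc.
  set u := tnth s (wi0 hk) in desc *; set v := tnth s (wi1 hk) in desc *.
  have GH : G \subset assoc_facet s :\ pjoin s k.+1 by rewrite subsetD1 Gs nG.
  have [lm|nlm] := boolP (is_min_label lab (pjoin s k `|` v) (pjoin s k.+2) u).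
    exfalso; set sw := upd2 s k v u.
    have Psw : goodB B sw.
      rewrite /goodB (upd2_minlab hk Hm (w_mlpv Hs Hm hk) lm) andbT.
      exact: perm_trans (upd2_perm s hk) os.
    have ag := upd2_agree hk (upd2_X2 lm).
    have Gsw : G \subset assoc_facet sw.
      by apply: subset_trans GH _; apply: ridge_sub => j _ _; apply: ag.
    have := smax sw; rewrite Psw Gsw => /(_ isT) /= h.
    by have := weight_swap desc; rewrite ltnNge h.
  rewrite /boundary /generated inE; apply/existsP; exists (assoc_facet s :\ pjoin s k.+1).
  rewrite GH andbT inE; apply/and3P; split.
  - by apply/DeltaP; exists s; rewrite /goodB ?os ?Hm ?subD1set.
  - have := cardsD1 (pjoin s k.+1) (assoc_facet s).
    rewrite pjoin_in_facet // (card_facet Hs) add1n => e.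
    move: (#|_ :\ _|) e => c e; by rewrite e.
  apply/cards1P; exists (assoc_facet s); apply/setP => F; rewrite inE in_set1; apply/andP/eqP.
    case=> /(facetsP _ hB) [t /andP[ot Hmt] ->] Ht.
    have Htt : spanning t := ord_span hB ot.
    have ag := ridge_agree hk Hs Htt Ht.
    have ag0 : pjoin t k = pjoin s k.
      by apply: ag; [apply: leqW; apply: ltnW | rewrite (ltn_eqF (ltnSn _))].
    have ag2 : pjoin t k.+2 = pjoin s k.+2.
      by apply: ag; [exact: hk | rewrite (gtn_eqF (ltnSn _))].
    have ut_in : tnth t (wi0 hk) \in s by rewrite (ord_mem _ os) -(ord_mem _ ot) mem_tnth.
    case/tnthP: ut_in => j ej.
    have j2 : tnth s j <= pjoin s k.+2.
      by rewrite -ej -ag2; apply: tnth_le_pjoin => /=; apply: leqW.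
    have j0 : ~~ (tnth s j <= pjoin s k) by rewrite -ej -ag0; exact: (span_new Htt (wi0 hk)).
    case: (w_elems Hs hk j2 j0) => ej'; rewrite ej' in ej.
      apply: facet_eq => j1 j1pos j1r; have [->|nj] := eqVneq j1 k.+1.
        by rewrite (pjoinS t (wi0 hk)) ej ag0 -(pjoinS s (wi0 hk)).
      by apply: ag => //; apply: leqW.
    exfalso.
    have tp : pjoin t k.+1 = pjoin s k `|` v by rewrite (pjoinS t (wi0 hk)) ej ag0.
    have vt_in : tnth t (wi1 hk) \in s by rewrite (ord_mem _ os) -(ord_mem _ ot) mem_tnth.
    case/tnthP: vt_in => j' ej2.
    have j'2 : tnth s j' <= pjoin s k.+2.
      by rewrite -ej2 -ag2; apply: tnth_le_pjoin.
    have j'0 : ~~ (tnth s j' <= pjoin s k).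
      by rewrite -ej2 -ag0; apply: (span_new_le Htt (i := wi1 hk)); apply: leqnSn.
    case: (w_elems Hs hk j'2 j'0) => ej3; rewrite ej3 in ej2.
      have := Hmt; move/forallP => /(_ (wi1 hk)); rewrite /= tp ag2 ej2 => h.
      by move: nlm; rewrite h.
    have := span_new Htt (wi1 hk); rewrite /= tp ej2 leUr //.
  move=> ->; split; last exact: subD1set.
  by apply/(facetsP _ hB); exists s; rewrite ?/goodB ?os.
exfalso.
have aB : atoms_set B by case/andP: hB => /andP[].
have aB' : atoms_set B' by case/andP: hB' => /andP[].
have cBB' : #|B| = #|B'|.
  by case/andP: hB => /andP[_ /eqP ->]; case/andP: hB' => /andP[_ /eqP ->].
case: (proj1 (lex_sets aB aB' cBB') lt) => a [aB'a naB Hlt].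
have aa : atom a := atoms_setP aB' aB'a.
have exi : exists i, a <= pjoin s i by exists r.+1; rewrite (span_top Hs) lex1.
case: (ex_minnP exi) => i ai imin.
have ir : (i <= r.+1)%N by apply: imin; rewrite (span_top Hs) lex1.
case: i ai imin ir => [|i'] ai imin ir.
  by rewrite pjoin0 in ai; move: aa => /andP[+ _]; rewrite lt_neqAle eq_le ai le0x.
have nai : ~~ (a <= pjoin s i') by apply/negP => /imin; rewrite ltnn.
set q : 'I_r.+1 := Ordinal ir.
have lq : (lab (tnth s q) < lab a)%N.
  have rq : rk (pjoin s i'.+1) = (rk (pjoin s i')).+1.
    by rewrite !(span_rk Hs) // ltnW.
  have := Hm; move/forallP => /(_ q) /= mq.
  case: (ml_elim (pjoin_mono s (leqnSn i')) rq mq) => aq _ _ /(_ a aa ai nai) le.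
  rewrite ltn_neqAle le andbT; apply/negP => /eqP e.
  have ea : tnth s q = a by apply: Hlab; rewrite ?inE.
  by move: naB; rewrite -(ord_mem _ os) -ea mem_tnth.
have exj : exists j, (j <= i')%N && ((j == 0%N) || (pjoin s j \in G)) by exists 0%N.
have bnd : forall j, (j <= i')%N && ((j == 0%N) || (pjoin s j \in G)) -> (j <= i')%N.
  by move=> j /andP[].
case: (ex_maxnP exj bnd) => i0 /andP[i0i' Pi0] i0max.
have mono : forall d (q0 : 'I_r.+1), (q0 + d)%N = i' -> (i0 <= q0)%N ->
    (lab (tnth s q0) <= lab (tnth s q))%N.
  elim=> [|d IH] q0 e h0.
    have -> : q0 = q by apply: val_inj; rewrite /= -e addn0.
    exact: leqnn.
  have hq0 : (q0 < r)%N by have := ir; rewrite -e addnS ltnS => h; apply: leq_ltn_trans (leq_addr d q0) h.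
  set kk : 'I_r := Ordinal hq0.
  have q1r : (q0.+1 < r.+1)%N := hq0.
  set q1 : 'I_r.+1 := Ordinal q1r.
  have e0 : wi0 (ltn_ord kk) = q0 by apply: val_inj.
  have e1 : wi1 (ltn_ord kk) = q1 by apply: val_inj.
  move/existsPn: none => /(_ kk); rewrite e0 e1 negb_and -leqNgt.
  have nG : pjoin s q0.+1 \notin G.
    apply/negP => hG; have := i0max q0.+1; rewrite hG orbT andbT.
    by rewrite -e addnS ltnS leq_addr => /(_ isT); rewrite leqNgt ltnS h0.
  rewrite /= nG orbF => l01.
  apply: leq_trans l01 _; apply: IH; first by rewrite /= addSnnS.
  by apply: leq_trans h0 _; apply: leqnSn.
have inB' : forall q0 : 'I_r.+1, (i0 <= q0)%N -> (q0 <= i')%N -> tnth s q0 \in B'.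
  move=> q0 h0 h1; apply: Hlt; first by rewrite -(ord_mem _ os) mem_tnth.
  apply: leq_ltn_trans (mono (i' - q0)%N q0 _ h0) lq; by rewrite subnKC.
have ey : pjoin s' i0 = pjoin s i0.
  case/orP: Pi0 => [/eqP -> | yG]; first by rewrite !pjoin0.
  have := subsetP Gs' _ yG => yin; case: (facet_rk Hs' yin) => _ _.
  rewrite (span_rk Hs) => [<-//|]; apply: leq_trans i0i' _; exact: ltnW.
set sq := drop i0 (take i'.+1 s).
have szsq : size sq = (i'.+1 - i0)%N by rewrite size_drop size_takel // size_tuple.
have memsq : forall x, x \in sq -> exists q0 : 'I_r.+1, [/\ (i0 <= q0)%N, (q0 <= i')%N & x = tnth s q0].
  move=> x /(nthP \bot) [j hj <-]; rewrite szsq in hj.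
  have hj' : (i0 + j < r.+1)%N by have := ir; move: hj; clear; lia.
  exists (Ordinal hj'); split => /=; first exact: leq_addr.
    by move: hj; clear; lia.
  rewrite nth_drop nth_take ?(tnth_nth \bot) //; by move: hj; clear; lia.
have uT : uniq (a :: sq).
  rewrite /= drop_uniq ?take_uniq ?(span_uniq Hs) // andbT.
  apply/negP => /memsq [q0 [_ _ ea]].
  by move: naB; rewrite -(ord_mem _ os) ea mem_tnth.
set T := [set x in a :: sq].
have cardT : #|T| = (i'.+1 - i0).+1 by rewrite cardsE (card_uniqP uT) /= szsq.
have subT : T \subset [set x in take r.+1 s'].
  apply/subsetP => x; rewrite !inE take_oversize ?size_tuple // (ord_mem _ os').
  case/orP => [/eqP -> //|/memsq [q0 [h0 h1 ->]]]; exact: inB'.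
have nleT : forall x, x \in T -> ~~ (x <= pjoin s' i0).
  move=> x; rewrite inE ey; case/orP => [/eqP -> | /memsq [q0 [h0 h1 ->]]].
    by apply: contra nai => h; apply: le_trans h (pjoin_mono _ i0i').
  exact: span_new_le.
have i0r : (i0 <= r.+1)%N := leq_trans i0i' (ltnW ir).
have := indep Hs' i0r subT nleT; rewrite cardT => erk.
have up : pjoin s' i0 `|` joinS T <= pjoin s i'.+1.
  rewrite ey leUx pjoin_mono ?(leq_trans i0i') //=; apply/joinsP => x.
  rewrite inE; case/orP => [/eqP -> // | xs]; apply: mem_take_le.
  exact: mem_drop xs.
have := rk_le up; rewrite erk (span_rk Hs ir).
by rewrite addnS subnKC ?ltnn // leqW.
Qed.



Lemma r_pos B B' : nbc_basis rk lab r.+1 B -> nbc_basis rk lab r.+1 B' ->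
  lexlt (labseq lab B') (labseq lab B) -> (0 < r)%N.
Proof.
case: (posnP r) => // r0 /andP[hB _] /andP[hB' _].
rewrite r0 in hB hB'; rewrite (basis1 hB) (basis1 hB').
by rewrite lexlt_irr.
Qed.

Lemma main_eq B : nbc_basis rk lab r.+1 B ->
  (exists B' : {set L}, nbc_basis rk lab r.+1 B' && lexlt (labseq lab B') (labseq lab B)) ->
  Delta lab r.+1 B :&:
    [set G : {set L} | [exists B' : {set L},
        [&& nbc_basis rk lab r.+1 B', lexlt (labseq lab B') (labseq lab B)
          & G \in Delta lab r.+1 B']]]
  = boundary (Delta lab r.+1 B) r.
Proof.
move=> nB [B0 /andP[nB0 lt0]]; have rp := r_pos nB nB0 lt0.
apply/setP => G; rewrite in_setI [in X in _ && X]inE; apply/idP/idP.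
  case/andP => GD /existsP [B' /and3P[nB' lt GD']]; exact: dirB GD nB' lt GD'.
move=> Gb; rewrite boundary_sub //=; apply/existsP; exact: dirA.
Qed.

End Main.

Unset Implicit Arguments.
Local Close Scope order_scope.

Theorem proposition4p5 (disp : Order.disp_t) (L : finTBLatticeType disp)
    (rk : L -> nat) (r : nat) (lab : L -> nat)
    (Hgeom : geometric rk)
    (Hrank : rk Order.top = r.+1)
    (Hlab : {in [pred a | atom a] &, injective lab})
    (B : {set L})
    (HB : nbc_basis rk lab r.+1 B)
    (Hnotfirst : exists B' : {set L},
        nbc_basis rk lab r.+1 B' && lexlt (labseq lab B') (labseq lab B)) :
  Delta lab r.+1 B :&:
    [set G : {set L} | [exists B' : {set L},
        [&& nbc_basis rk lab r.+1 B', lexlt (labseq lab B') (labseq lab B)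
          & G \in Delta lab r.+1 B']]]
  = boundary (Delta lab r.+1 B) r.
Proof. exact: main_eq Hgeom Hrank Hlab B HB Hnotfirst. Qed.
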